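(* Let $G=(V,E)$ be a connected graph with at least two vertices and let $v\in\mathrm{core}(G)$. Let $C_1,\ldots,C_k$ be the connected components of $G-N[v]$, and for $1\le i\le k$ let $N_i$ be the set of neighbors of $v$ having at least one neighbor in $C_i$. If $N_i$ induces a clique in $G$ for every $i\in\{1,\ldots,k\}$, then $\gamma(G-v)>\gamma(G)$, i.e. $v\in V^+$.
   Context: All graphs are finite, simple and undirected. $N[v]$ is the closed neighborhood of $v$; $G-X$ denotes the subgraph induced by $V\setminus X$, and $G-v=G-\{v\}$. $\gamma(G)$ is the domination number; a minimum dominating set (mds) is a dominating set of size $\gamma(G)$; $\mathrm{core}(G)$ is the set of vertices in every mds. $V^+=\{v\in V:\gamma(G-v)>\gamma(G)\}$. *)

(* Defs.v *)
(* A simple graph: finite vertex type T, symmetric irreflexive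
   adjacency relation e. Induced subgraphs are represented by vertex sets S. *)
From mathcomp Require Import all_boot.
Set Implicit Arguments. Unset Strict Implicit. Unset Printing Implicit Defensive.

Definition simple_graph (T : finType) (e : rel T) : Prop :=
  symmetric e /\ irreflexive e.

Definition cnbh (T : finType) (e : rel T) (v : T) : {set T} :=
  [set x | (x == v) || e v x].

Definition dominates_in (T : finType) (e : rel T) (S D : {set T}) : bool :=
  (D \subset S) && [forall x in S, (x \in D) || [exists y in D, e x y]].

(* domination number of G[S]: the minimum size of a dominating set of G[S]
   (S itself dominates S, so #|S| is a valid initial value for the min) *)
Definition gamma_in (T : finType) (e : rel T) (S : {set T}) : nat :=
  \big[minn/#|S|]_(D : {set T} | dominates_in e S D) #|D|.

Definition gamma (T : finType) (e : rel T) : nat := gamma_in e [set: T].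

Definition is_mds (T : finType) (e : rel T) (D : {set T}) : bool :=
  dominates_in e [set: T] D && (#|D| == gamma e).

Definition core (T : finType) (e : rel T) : {set T} :=
  [set v | [forall D : {set T}, is_mds e D ==> (v \in D)]].

Definition induced_rel (T : finType) (e : rel T) (S : {set T}) : rel T :=
  fun a b => [&& e a b, a \in S & b \in S].

Definition conn_in (T : finType) (e : rel T) (S : {set T}) (x y : T) : bool :=
  [&& x \in S, y \in S & connect (induced_rel e S) x y].

Definition component (T : finType) (e : rel T) (S : {set T}) (x : T) : {set T} :=
  [set y | conn_in e S x y].

Definition connected_graph (T : finType) (e : rel T) : Prop :=
  forall x y : T, connect e x y.

Definition is_clique (T : finType) (e : rel T) (A : {set T}) : Prop :=
  forall x y, x \in A -> y \in A -> x != y -> e x y.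

(* Main.v *)
Require Import Defs.
From mathcomp Require Import all_boot.
From mathcomp Require Import zify.
Set Implicit Arguments. Unset Strict Implicit. Unset Printing Implicit Defensive.

Section G.
Variables (T : finType) (e : rel T).
Hypothesis sym_e : symmetric e.
Hypothesis irr_e : irreflexive e.

Lemma bigmin_le (S D : {set T}) : dominates_in e S D -> gamma_in e S <= #|D|.
Proof.
move=> hD; rewrite /gamma_in.
have : D \in index_enum {set T} by rewrite mem_index_enum.
elim: (index_enum _) => // a r IH; rewrite inE big_cons => /orP[/eqP<-|Dr].
  by rewrite hD geq_minl.
case: ifP => _; last exact: IH.
by rewrite geq_min IH // orbT.
Qed.

Lemma bigmin_att (S : {set T}) :
  exists D, dominates_in e S D /\ #|D| = gamma_in e S.
Proof.
have domS : dominates_in e S S.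
  by apply/andP; split => //; apply/forall_inP => x ->.
rewrite /gamma_in; apply: (big_ind (fun n => exists D, dominates_in e S D /\ #|D| = n)).
- by exists S.
- move=> a b [Da [h1 h2]] [Db [h3 h4]]; rewrite /minn; case: ltnP => _.
  + by exists Da. + by exists Db.
- by move=> D hD; exists D.
Qed.

Definition closedS (S W : {set T}) :=
  (W \subset S) && [forall c in W, forall y, ((y \in S) && e c y) ==> (y \in W)].

Lemma closedP (S W : {set T}) : closedS S W -> forall c y, c \in W -> y \in S -> e c y -> y \in W.
Proof.
move=> /andP[_ /forall_inP H] c y cW yS ecy.
by have /forallP/(_ y) := H c cW; rewrite yS ecy.
Qed.

Lemma closed_sub (S W : {set T}) : closedS S W -> W \subset S.
Proof. by case/andP. Qed.

Lemma closedI (S W : {set T}) : W \subset S -> (forall c y, c \in W -> y \in S -> e c y -> y \in W) ->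
  closedS S W.
Proof.
move=> sub H; apply/andP; split => //; apply/forall_inP => c cW; apply/forallP => y.
by apply/implyP => /andP[yS ecy]; apply: H cW yS ecy.
Qed.

Lemma comp_sub (S W : {set T}) x : closedS S W -> x \in W -> component e S x \subset W.
Proof.
move=> cW xW; apply/subsetP => y; rewrite inE => /and3P[_ _ /connectP[p hp ->]].
elim: p x xW hp => //= z p IH x xW /andP[/and3P[exz _ zS] hp].
apply: IH hp; apply: (closedP cW xW zS exz).
Qed.

Lemma comp_closed (S : {set T}) x : x \in S -> closedS S (component e S x).
Proof.
move=> xS; apply: closedI.
  by apply/subsetP => y; rewrite inE => /and3P[].
move=> c y; rewrite !inE => /and3P[_ cS cx] yS ecy.
rewrite /conn_in xS yS /=; apply: connect_trans cx _; apply: connect1.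
by rewrite /induced_rel ecy cS yS.
Qed.

Lemma comp_self (S : {set T}) x : x \in S -> x \in component e S x.
Proof. by move=> xS; rewrite inE /conn_in xS connect0. Qed.

Lemma closedD (S W C : {set T}) : closedS S W -> closedS S C -> closedS S (W :\: C).
Proof.
move=> cW cC; apply: closedI.
  by apply: subset_trans (subsetDl _ _) (closed_sub cW).
move=> c y; rewrite !inE => /andP[cnC cW'] yS ecy; rewrite (closedP cW cW' yS ecy) andbT.
apply/negP => yC; move/negP: cnC; apply.
apply: (closedP cC yC) => //; last by rewrite sym_e.
by apply: (subsetP (closed_sub cW)).
Qed.


Lemma inS v x : (x \in ~: cnbh e v) = ~~ ((x == v) || e v x).
Proof. by rewrite !inE. Qed.

Lemma domP (S D : {set T}) x : dominates_in e S D -> x \in S ->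
  (x \in D) || [exists y in D, e x y].
Proof. by case/andP => _ /forall_inP H /H. Qed.

Lemma dom_sub (S D : {set T}) : dominates_in e S D -> D \subset S.
Proof. by case/andP. Qed.

Lemma Ylemma v (D D' W Q : {set T}) :
  dominates_in e [set: T] D -> dominates_in e [set~ v] D' ->
  closedS (~: cnbh e v) W ->
  (forall q, q \in Q -> e v q) -> (exists q, q \in Q) ->
  (forall q, q \in D -> e v q -> [exists c in W, e q c] -> q \in Q) ->
  (forall w, e v w -> [exists c in W, e w c] -> (w \in Q) || [exists q in Q, e w q]) ->
  dominates_in e [set: T] ((D' :\: W) :|: (D :&: W) :|: Q) /\
  v \notin ((D' :\: W) :|: (D :&: W) :|: Q).
Proof.
move=> hD hD' cW hQv [q0 q0Q] hDQ hNQ.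
have WS := closed_sub cW.
have vW : v \notin W.
  by apply/negP => /(subsetP WS); rewrite inS eqxx.
split; last first.
  rewrite !inE (negbTE vW) /= !andbF /=.
  have := dom_sub hD' => /subsetP/(_ v) H.
  rewrite orbF negb_or; apply/andP; split; first by apply/negP=> /H; rewrite !inE eqxx.
  by apply/negP => /hQv; rewrite irr_e.
apply/andP; split; first exact: subsetT.
apply/forall_inP => x _.
have inY1 y : y \in D' -> y \notin W -> y \in ((D' :\: W) :|: (D :&: W) :|: Q).
  by move=> h1 h2; rewrite !inE h1 h2.
have inY2 y : y \in D -> y \in W -> y \in ((D' :\: W) :|: (D :&: W) :|: Q).
  by move=> h1 h2; rewrite !inE h1 h2 orbT.
have inY3 y : y \in Q -> y \in ((D' :\: W) :|: (D :&: W) :|: Q).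
  by move=> h1; rewrite !inE h1 !orbT.
case: (eqVneq x v) => [->|xv].
  apply/orP; right; apply/existsP; exists q0; rewrite inY3 //.
  exact: hQv.
case exv: (e v x).
  have xW : x \notin W by apply/negP => /(subsetP WS); rewrite inS exv orbT.
  case: (boolP [exists c in W, e x c]) => hxW.
    case/orP: (hNQ x exv hxW) => [/inY3 -> //|/exists_inP[q qQ exq]].
    by apply/orP; right; apply/exists_inP; exists q => //; apply: inY3.
  have : x \in [set~ v] by rewrite !inE.
  move/(domP hD') => /orP[xD'|/exists_inP[d dD' exd]].
    by rewrite inY1.
  apply/orP; right; apply/exists_inP; exists d => //; apply: inY1 => //.
  by apply/negP => dW; move/negP: hxW; apply; apply/exists_inP; exists d.
have xS : x \in ~: cnbh e v by rewrite inS exv (negbTE xv).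
case: (boolP (x \in W)) => xW.
  move/(domP hD): (in_setT x) => /orP[xD|/exists_inP[d dD exd]].
    by rewrite inY2.
  apply/orP; right; apply/exists_inP; exists d => //.
  case: (eqVneq d v) => [dv|dv].
    by move: exd; rewrite dv sym_e exv.
  case evd: (e v d).
    apply: inY3; apply: hDQ => //; apply/exists_inP; exists x => //.
    by rewrite sym_e.
  apply: inY2 => //; apply: (closedP cW xW) => //.
  by rewrite inS evd (negbTE dv).
have : x \in [set~ v] by rewrite !inE.
move/(domP hD') => /orP[xD'|/exists_inP[d dD' exd]].
  by rewrite inY1.
apply/orP; right; apply/exists_inP; exists d => //; apply: inY1 => //.
apply/negP => dW; move/negP: xW; apply; apply: (closedP cW dW xS).
by rewrite sym_e.
Qed.

Lemma conn_out v (W : {set T}) x : connected_graph e ->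
  closedS (~: cnbh e v) W -> x \in W ->
  exists c p, [/\ c \in W, e v p & e p c].
Proof.
move=> hc cW xW; have /connectP[p hp pv] := hc x v.
elim: p x xW hp pv => [|z p IH] x xW /=.
  move=> _ vx; move: xW; rewrite -vx => /(subsetP (closed_sub cW)).
  by rewrite inS eqxx.
case/andP => exz hp pv.
have xS := subsetP (closed_sub cW) x xW.
case zS: (z \in ~: cnbh e v).
  exact: (IH z (closedP cW xW zS exz) hp pv).
move: zS; rewrite inS => /negbFE => /orP[/eqP zv|evz].
  by move: xS; rewrite inS -zv sym_e exz orbT.
by exists x, z; split => //; rewrite sym_e.
Qed.

Lemma nbr_exists v : connected_graph e -> 2 <= #|T| -> exists u, e v u.
Proof.
move=> hc h2.
have [y yv] : exists y, y != v.
  have : 0 < #|[set~ v]| by rewrite cardsC1; case: #|T| h2 => [|[]].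
  by case/card_gt0P => y; rewrite !inE => ?; exists y.
have /connectP[p hp py] := hc v y.
case: p hp py => [|z p] /=; first by move=> _ yv'; move: yv; rewrite yv' eqxx.
by case/andP => evz _; exists z.
Qed.

Lemma lexK1 ka kb n wa wb : ka*(n.+1) + (n-wa) <= kb*(n.+1)+(n-wb) -> wa<=n -> wb<=n -> ka <= kb.
Proof. move=> h1 h2 h3; case: (leqP ka kb) => // h.
have : kb.+1 * n.+1 <= ka * n.+1 by rewrite leq_mul2r h orbT.
lia. Qed.
Lemma lexK2 ka kb n wa wb : ka*(n.+1) + (n-wa) <= kb*(n.+1)+(n-wb) -> wa<=n -> wb<=n -> wa < wb -> ka < kb.
Proof. move=> h1 h2 h3 h4; case: (leqP kb ka) => // h.
have : kb * n.+1 <= ka * n.+1 by rewrite leq_mul2r h orbT.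
lia. Qed.

Lemma cardU3 (X Y Z : {set T}) : #|X :|: Y :|: Z| <= #|X| + #|Y| + #|Z|.
Proof.
have h1 := cardsUI (X :|: Y) Z; have h2 := cardsUI X Y; lia.
Qed.

End G.

Ltac plia := repeat match goal with H : ?P |- _ =>
  match type of P with Prop => clear H end end; lia.

Theorem lemma3 (T : finType) (e : rel T) (v : T) :
  simple_graph e -> connected_graph e -> 2 <= #|T| ->
  v \in core e ->
  (forall x : T, x \in ~: cnbh e v ->
     is_clique e [set u | e v u &&
        [exists c in component e (~: cnbh e v) x, e u c]]) ->
  gamma e < gamma_in e [set~ v].
Proof.
move=> [sym irr] hc h2 vcore hcl.
have no_small Y : dominates_in e [set: T] Y -> v \notin Y -> gamma e < #|Y|.
  move=> hY vY; have := bigmin_le hY; rewrite leq_eqVlt => /orP[/eqP hg|//].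
  move: vcore; rewrite inE => /forallP/(_ Y)/implyP; rewrite /is_mds hY -hg eqxx.
  by move=> /(_ isT) vY'; rewrite vY' in vY.
rewrite ltnNge; apply/negP => hle.
have [D' [hD' cD']] := bigmin_att e [set~ v].
have [D [hD cD]] := bigmin_att e [set: T].
rewrite -/(gamma e) in cD.
have vD : v \in D.
  move: vcore; rewrite inE => /forallP/(_ D)/implyP; apply.
  by rewrite /is_mds hD cD eqxx.
have [u evu] := nbr_exists v hc h2.
set S := ~: cnbh e v.
have cl0 : closedS e S set0.
  apply/andP; split; first exact: sub0set.
  by apply/forall_inP => c; rewrite inE.
have ex0 x : [exists c in set0, e x c] = false.
  by apply/negbTE/exists_inP => -[c]; rewrite inE.
have add1 u' : e v u' -> gamma e < #|D'| + 1.
  move=> evu'.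
  have [hY vY] := @Ylemma _ _ sym irr v D D' set0 [set u'] hD hD' cl0
    ltac:(by move=> q; rewrite inE => /eqP ->) (ex_intro _ u' (set11 u'))
    ltac:(by move=> q _ _; rewrite ex0) ltac:(by move=> w _; rewrite ex0).
  have := no_small _ hY vY; have := cardU3 (D' :\: set0) (D :&: set0) [set u'].
  by rewrite setD0 setI0 cards0 cards1; plia.
have eD' : #|D'| = gamma e.
  have := add1 u evu; have := hle; rewrite -cD'; plia.
have D'S : D' \subset S.
  apply/subsetP => x xD'; rewrite inS; apply/negP => /orP[/eqP xv|evx].
    by move: (subsetP (dom_sub hD') x xD'); rewrite xv !inE eqxx.
  have [hY vY] := @Ylemma _ _ sym irr v D D' set0 [set x] hD hD' cl0
    ltac:(by move=> q; rewrite inE => /eqP ->) (ex_intro _ x (set11 x))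
    ltac:(by move=> q _ _; rewrite ex0) ltac:(by move=> w _; rewrite ex0).
  have := no_small _ hY vY.
  have -> : D' :\: set0 :|: D :&: set0 :|: [set x] = D'.
    apply/setP => y; rewrite !inE; case: (eqVneq y x) => [->|]; first by rewrite xD' orbT.
    by rewrite orbF andbF orbF.
  by rewrite eD' ltnn.
set A := [set q in D | e v q].
pose QW (W : {set T}) := [set q in A | [exists c in W, e q c]].
pose k (W : {set T}) := #|D' :&: W| + #|(D :&: S) :\: W| + #|A :\: QW W|.
pose K (W : {set T}) := k W * #|T|.+1 + (#|T| - #|W|).
have clS : closedS e S S.
  by apply: closedI => //.
have F1 (W : {set T}) : W \subset S -> #|D :&: W| + #|(D :&: S) :\: W| = #|D :&: S|.
  move=> WS; rewrite -(cardsID W (D :&: S)).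
  have -> : D :&: S :&: W = D :&: W.
    apply/setP => x; rewrite !inE; case xW: (x \in W) ; rewrite ?andbF //=.
    by move: (subsetP WS x xW); rewrite !inE => ->; rewrite !andbT.
  by [].
have F2 (W : {set T}) : #|QW W| + #|A :\: QW W| = #|A|.
  rewrite -(cardsID (QW W) A).
  have -> : A :&: QW W = QW W.
    by apply/setP => x; rewrite !inE; case: (x \in D) => //=; case: (e v x).
  by [].
have F3 : #|D| = 1 + #|D :&: S| + #|A|.
  rewrite -(cardsID S D) (cardsD1 v (D :\: S)).
  have -> : (D :\: S) :\ v = A.
    apply/setP => x; rewrite !inE negbK; case: (eqVneq x v) => [->|] /=.
      by rewrite irr andbF.
    by rewrite andbC.
  by rewrite !inE negbK eqxx vD; plia.
have F4 : #|D' :&: S| = #|D'| by rewrite (setIidPl D'S).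
have [W cW maxW] := arg_maxnP K clS.
have WS := closed_sub cW.
have cardW (W0 : {set T}) : #|W0| <= #|T| by apply: max_card.
have kSW : k S <= k W.
  by apply: (lexK1 (maxW S clS)); apply: cardW.
have hW : #|D :&: W| + #|QW W| < #|D' :&: W|.
  have := F1 W WS; have := F1 S (subxx _); have := F2 W; have := F2 S.
  have := kSW; have := F3; have := F4; have := eD'; have := cD; rewrite /k; plia.
case: (boolP [exists x in W, [forall q in A, [forall c in component e S x, ~~ e q c]]]).
  case/exists_inP => x xW /forall_inP hx.
  have xS := subsetP WS x xW.
  set C := component e S x.
  have cC : closedS e S C by apply: comp_closed.
  have CW : C \subset W by apply: comp_sub.
  have xC : x \in C by apply: comp_self.
  have cW' := closedD sym cW cC.
  have ltW' : #|W :\: C| < #|W|.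
    rewrite -(cardsID C W) -addn1 addnC leq_add2r card_gt0.
    by apply/set0Pn; exists x; rewrite inE xW xC.
  have kW' : k (W :\: C) < k W.
    by apply: (lexK2 (maxW _ cW')) => //; apply: cardW.
  have QWeq : QW (W :\: C) = QW W.
    apply/setP => q; rewrite !inE; case qD: (q \in D); case evq: (e v q) => //=.
    have qA : q \in A by rewrite inE qD evq.
    apply/exists_inP/exists_inP => [[c]|[c cW0 eqc]].
      by rewrite inE => /andP[_ ?] ?; exists c.
    exists c => //; rewrite inE cW0 andbT; apply/negP => cC0.
    by move: (hx q qA) => /forall_inP/(_ c cC0); rewrite eqc.
  have G1 (X : {set T}) : #|X :&: (W :\: C)| + #|X :&: C| = #|X :&: W|.
    rewrite -(cardsID C (X :&: W)) addnC.
    have -> : X :&: W :&: C = X :&: C.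
      apply/setP => y; rewrite !in_setI; case yC: (y \in C); rewrite ?andbF ?andbT //=.
      by rewrite (subsetP CW y yC) andbT.
    have -> : (X :&: W) :\: C = X :&: (W :\: C).
      by apply/setP => y; rewrite !(in_setI, in_setD); case: (y \in C); case: (y \in X); case: (y \in W).
    by [].
  have hC : #|D :&: C| < #|D' :&: C|.
    have := F1 _ (closed_sub cW'); have := F1 W WS; have := F2 W; have := F2 (W :\: C).
    have := G1 D; have := G1 D'; move: kW'; rewrite /k QWeq; plia.
  have [c [p [cC0 evp epc]]] := conn_out sym hc cC xC.
  have pin : p \in [set u | e v u && [exists c in C, e u c]].
    by rewrite inE evp; apply/exists_inP; exists c.
  have hDQ1 : forall q, q \in D -> e v q -> [exists c in C, e q c] -> q \in [set p].
    move=> q qD evq /exists_inP[c' c'C eqc'].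
    have qA : q \in A by rewrite inE qD evq.
    by move: (hx q qA) => /forall_inP/(_ c' c'C); rewrite eqc'.
  have hNQ1 : forall w, e v w -> [exists c in C, e w c] ->
      (w \in [set p]) || [exists q in [set p], e w q].
    move=> w evw hw; case: (eqVneq w p) => [->|wp]; first by rewrite set11.
    apply/orP; right; apply/exists_inP; exists p; first exact: set11.
    apply: (hcl x xS) => //; by rewrite inE evw.
  have [hY vY] := @Ylemma _ _ sym irr v D D' C [set p] hD hD' cC
    ltac:(by move=> q; rewrite inE => /eqP ->) (ex_intro _ p (set11 p)) hDQ1 hNQ1.
  have := no_small _ hY vY; have := cardU3 (D' :\: C) (D :&: C) [set p].
  have := cardsID C D'; have := hC; have := eD'; rewrite cards1; plia.
move=> hno.
have hx x : x \in W -> [exists q in A, [exists c in component e S x, e q c]].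
  move=> xW; case: (boolP [exists q in A, [exists c in component e S x, e q c]]) => // /negP hn.
  exfalso; move/negP: hno; apply; apply/exists_inP.
  exists x => //; apply/forall_inP => q qA; apply/forall_inP => c cC; apply/negP => eqc.
  by apply: hn; apply/exists_inP; exists q => //; apply/exists_inP; exists c.
have hQ (c : T) : c \in W -> exists q, [/\ q \in QW W, q \in A &
   exists c', c' \in component e S c /\ e q c'].
  move=> cW0; have /exists_inP[q qA /exists_inP[c' c'C eqc']] := hx c cW0.
  exists q; split => //; last by exists c'.
  rewrite inE qA /=; apply/exists_inP; exists c' => //.
  exact: (subsetP (comp_sub cW cW0)).
have [x xDW] : exists x, x \in D' :&: W.
  by apply/set0Pn; rewrite -card_gt0; have := hW; plia.
have xW : x \in W by move: xDW; rewrite inE => /andP[].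
have [q0 [q0Q _ _]] := hQ x xW.
have hDQ2 : forall q, q \in D -> e v q -> [exists c in W, e q c] -> q \in QW W.
  by move=> q qD evq hq; rewrite !inE qD evq hq.
have hNQ2 : forall w, e v w -> [exists c in W, e w c] ->
    (w \in QW W) || [exists q in QW W, e w q].
  move=> w evw /exists_inP[c cW0 ewc].
  have [q [qQ qA [c' [c'C eqc']]]] := hQ c cW0.
  case: (eqVneq w q) => [->|wq]; first by rewrite qQ.
  apply/orP; right; apply/exists_inP; exists q => //.
  have cS := subsetP WS c cW0.
  apply: (hcl c cS) => //.
  + by rewrite inE evw; apply/exists_inP; exists c => //; apply: comp_self.
  + have evq : e v q by move: qA; rewrite inE; case/andP.
    by rewrite inE evq; apply/exists_inP; exists c'.
have [hY vY] := @Ylemma _ _ sym irr v D D' W (QW W) hD hD' cW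
    ltac:(by move=> q; rewrite !inE => /andP[/andP[]]) (ex_intro _ q0 q0Q) hDQ2 hNQ2.
have := no_small _ hY vY; have := cardU3 (D' :\: W) (D :&: W) (QW W).
have := cardsID W D'; have := hW; have := eD'; plia.
Qed.
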